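(* Let $N\ge 1$ be an integer, let $\gamma>0$, $\upsilon\in(0,1]$, $P_b>0$, $h>0$, $T>0$, and let $p_1>p_2>\cdots>p_N>0$ with $p_1\le 1$. Consider Problem P1: minimize $\sum_{k=1}^N \gamma p_k f_k^2$ over $(f_1,\dots,f_N)$ subject to $\sum_{k=1}^m \gamma f_k^2 \le \upsilon P_b h \sum_{k=1}^m \frac{1}{f_k}$ for $m=1,\dots,N$, $\sum_{k=1}^N \frac{1}{f_k}\le T$, and $f_k>0$ for all $k$; Problem P2: minimize $\sum_{k=1}^N \gamma p_k f_k^2$ over $(f_1,\dots,f_N,y_1,\dots,y_N)$ subject to $\sum_{k=1}^m \gamma f_k^2 \le \upsilon P_b h \sum_{k=1}^m y_k$ for $m=1,\dots,N$, $\sum_{k=1}^N y_k\le T$, and $f_k>0$, $\frac{1}{f_k}-y_k\le 0$ for all $k$. Then the solution of Problem P2 also solves Problem P1: if $(\{f_k^*\},\{y_k^*\})$ is an optimal solution of P2, then $y_k^*=1/f_k^*$ for all $k$ and $(f_1^*,\dots,f_N^* )$ is an optimal solution of P1.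
   Context: Model: $f_k$ is the CPU frequency of the $k$-th CPU cycle of a mobile device, $p_k$ is the probability that the $k$-th cycle is executed (the sequence is decreasing in $k$), $\gamma f^2$ is the energy consumed by one cycle at frequency $f$, $\upsilon P_b h$ is the harvested power, and $T$ is the deadline. P2 is obtained from P1 by substituting $y_k=1/f_k$ and relaxing $y_kf_k=1$ to $y_kf_k\ge 1$. *)

(* Defs.v *)
From mathcomp Require Import all_boot all_order all_algebra.
From mathcomp Require Import reals.
Set Implicit Arguments. Unset Strict Implicit. Unset Printing Implicit Defensive.
Import Order.TTheory GRing.Theory Num.Theory.
Local Open Scope ring_scope.

Section P.
Variables (R : realType) (N : nat) (gamma upsilon Pb h T : R) (p : 'I_N -> R).

Definition obj (f : 'I_N -> R) : R := \sum_(k < N) gamma * p k * f k ^+ 2.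

(* feasibility for P1; the prefix constraints are indexed by m = 1..N,
   i.e. sums over k with (k < m)%N *)
Definition feasible1 (f : 'I_N -> R) : Prop :=
  (forall k, 0 < f k) /\
  (forall m : nat, (1 <= m <= N)%N ->
     \sum_(k < N | (k < m)%N) gamma * f k ^+ 2
       <= upsilon * Pb * h * \sum_(k < N | (k < m)%N) (f k)^-1) /\
  \sum_(k < N) (f k)^-1 <= T.

Definition optimal1 (f : 'I_N -> R) : Prop :=
  feasible1 f /\ forall g, feasible1 g -> obj f <= obj g.

Definition feasible2 (f y : 'I_N -> R) : Prop :=
  (forall k, 0 < f k) /\
  (forall k, (f k)^-1 - y k <= 0) /\
  (forall m : nat, (1 <= m <= N)%N ->
     \sum_(k < N | (k < m)%N) gamma * f k ^+ 2
       <= upsilon * Pb * h * \sum_(k < N | (k < m)%N) y k) /\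
  \sum_(k < N) y k <= T.

Definition optimal2 (f y : 'I_N -> R) : Prop :=
  feasible2 f y /\ forall g z, feasible2 g z -> obj f <= obj g.

End P.

(* Main.v *)
Require Import Defs.
From mathcomp Require Import all_boot all_order all_algebra.
From mathcomp Require Import reals.
From mathcomp Require Import lra.
Import Order.TTheory GRing.Theory Num.Theory.
Local Open Scope ring_scope.

Theorem lemma1 (R : realType) (N : nat) (gamma upsilon Pb h T : R)
  (p : 'I_N -> R)
  (HN : (1 <= N)%N) (Hgamma : 0 < gamma) (Hups0 : 0 < upsilon)
  (Hups1 : upsilon <= 1) (HPb : 0 < Pb) (Hh : 0 < h) (HT : 0 < T)
  (Hpdec : forall i j : 'I_N, (i < j)%N -> p j < p i)
  (Hppos : forall k : 'I_N, 0 < p k)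
  (Hp1 : forall k : 'I_N, nat_of_ord k = 0%N -> p k <= 1)
  (fs ys : 'I_N -> R) :
  optimal2 gamma upsilon Pb h T p fs ys ->
  (forall k, ys k = (fs k)^-1) /\ optimal1 gamma upsilon Pb h T p fs.
Proof.
move=> [[Hf [Hy [Hm HT2]]] Hopt].
have Heq : forall k, ys k = (fs k)^-1.
  move=> k; apply/eqP; rewrite eq_le; apply/andP; split; last first.
    by have := Hy k; rewrite subr_le0.
  rewrite leNgt; apply/negP => Hlt.
  have fk0 := Hf k.
  have yk0 : 0 < ys k by apply: lt_trans Hlt; rewrite invr_gt0.
  have Hlt' : (ys k)^-1 < fs k.
    by rewrite -[fs k]invrK ltf_pV2 ?posrE ?invr_gt0.
  set c := ((ys k)^-1 + fs k) / 2.
  have c1 : (ys k)^-1 < c by rewrite /c; lra.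
  have c2 : c < fs k by rewrite /c; lra.
  have c0 : 0 < c by apply: lt_trans c1; rewrite invr_gt0.
  set g := fun i => if i == k then c else fs i.
  have gle : forall i, g i ^+ 2 <= fs i ^+ 2.
    move=> i; rewrite /g; case: eqP => [->|_] //.
    by rewrite lerXn2r ?nnegrE ?ltW.
  have Hfeas : feasible2 gamma upsilon Pb h T g ys.
    split; first by move=> i; rewrite /g; case: (i == k).
    split.
      move=> i; rewrite /g; case: eqP => [Hik|_]; last exact: Hy.
      rewrite Hik subr_le0 -[ys k]invrK lef_pV2 ?posrE ?invr_gt0 //; exact: ltW.
    split=> // m Hm1; apply: le_trans (Hm m Hm1).
    by apply: ler_sum => i _; rewrite ler_pM2l.
  have := Hopt _ _ Hfeas; apply/negP; rewrite -ltNge /obj.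
  rewrite (bigD1 k) //= [X in _ < X](bigD1 k) //=.
  have -> : \sum_(i < N | i != k) gamma * p i * g i ^+ 2 =
            \sum_(i < N | i != k) gamma * p i * fs i ^+ 2.
    by apply: eq_bigr => i /negPf Hi; rewrite /g Hi.
  rewrite ltrD2r /g eqxx ltr_pM2l ?mulr_gt0 //.
  by rewrite ltrXn2r ?nnegrE ?ltW.
split=> //.
have F1 : forall g : 'I_N -> R, feasible1 gamma upsilon Pb h T g ->
   feasible2 gamma upsilon Pb h T g (fun i => (g i)^-1).
  rewrite /feasible1 /feasible2 => g [H1 [H2 H3]]; split=> //; split=> //.
  by move=> i; rewrite subrr.
rewrite /optimal1 /feasible1; split.
  split=> //; split.
    by move=> m Hm1; rewrite (eq_bigr _ (fun i _ => esym (Heq i))); exact: Hm.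
  by rewrite (eq_bigr _ (fun i _ => esym (Heq i))).
by move=> g Hg; apply: (Hopt g); apply: F1.
Qed.
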